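(* Let $X\in\mathbb{Z}^{d\times N}$ be a matrix of full rank $d$ representing an arithmetic matroid $\mathcal{A}$, and suppose $X$ is in $B$-basic form, $X=(B\,|\,A)$ with $B\in\mathbb{Z}^{d\times d}$ a diagonal matrix of full rank with non-negative entries and $A\in\mathbb{Z}^{d\times(N-d)}$. Suppose that $X'=(B\,|\,A')\in\mathbb{Z}^{d\times N}$ represents the same arithmetic matroid $\mathcal{A}$. Then $|a_{ij}|=|a'_{ij}|$ for all entries, i.e. the entries of $A$ and $A'$ are equal up to sign.
   Context: The arithmetic matroid represented by $X\in\mathbb{Z}^{d\times N}$ with columns $x_1,\dots,x_N$ is $([N],\operatorname{rk},m)$ where $\operatorname{rk}(S)$ is the dimension of the real span $\langle S\rangle_{\mathbb{R}}$ of $\{x_e:e\in S\}$ and $m(S)=|(\langle S\rangle_{\mathbb{R}}\cap\mathbb{Z}^d)/\langle S\rangle|$, with $\langle S\rangle$ the subgroup of $\mathbb{Z}^d$ generated by $\{x_e:e\in S\}$. Two matrices represent the same arithmetic matroid if these rank and multiplicity functions coincide. *)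

(* Defs.v *)
From HB Require Import structures.
From mathcomp Require Import all_boot all_order all_algebra.
From mathcomp Require Import Rstruct.
From Stdlib Require Import Reals.
Set Implicit Arguments. Unset Strict Implicit. Unset Printing Implicit Defensive.
Import Order.TTheory GRing.Theory Num.Theory.
Local Open Scope ring_scope.

Definition toR (d N : nat) (X : 'M[int]_(d, N)) : 'M[R]_(d, N) :=
  map_mx (fun z : int => (z%:~R : R)) X.

(* rk(S) = dim of the real span of {x_e : e in S}
   = rank of the real matrix whose columns outside S are zeroed *)
Definition rk (d N : nat) (X : 'M[int]_(d, N)) (S : {set 'I_N}) : nat :=
  \rank (\matrix_(i < d, j < N) (if j \in S then (X i j)%:~R else 0) : 'M[R]_(d, N)).

Definition in_lattice (d N : nat) (X : 'M[int]_(d, N)) (S : {set 'I_N})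
  (v : 'cV[int]_d) : Prop :=
  exists c : 'I_N -> int, v = \sum_(e in S) c e *: col e X.

Definition in_span (d N : nat) (X : 'M[int]_(d, N)) (S : {set 'I_N})
  (v : 'cV[int]_d) : Prop :=
  exists c : 'I_N -> R, toR v = \sum_(e in S) c e *: col e (toR X).

(* m(S) = k : the quotient group (<S>_R ∩ Z^d) / <S> has exactly k elements,
   i.e. there are k pairwise incongruent (mod <S>) representatives in
   <S>_R ∩ Z^d and every element of <S>_R ∩ Z^d is congruent to one of them. *)
Definition mult_is (d N : nat) (X : 'M[int]_(d, N)) (S : {set 'I_N}) (k : nat)
  : Prop :=
  exists r : 'I_k -> 'cV[int]_d,
    [/\ forall i, in_span X S (r i),
        forall i j, in_lattice X S (r i - r j) -> i = j
      & forall v, in_span X S v -> exists i, in_lattice X S (v - r i)].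

Definition same_arith_matroid (d N : nat) (X X' : 'M[int]_(d, N)) : Prop :=
  (forall S : {set 'I_N}, rk X S = rk X' S) /\
  (forall (S : {set 'I_N}) (k : nat), mult_is X S k <-> mult_is X' S k).

(* Main.v *)
Require Import Defs.
From HB Require Import structures.
From mathcomp Require Import all_boot all_order all_algebra.
From mathcomp Require Import Rstruct.
From mathcomp Require Import zify.
From Stdlib Require Import Reals ClassicalEpsilon.
Import Order.TTheory GRing.Theory Num.Theory.
Local Open Scope ring_scope.
Set Implicit Arguments. Unset Strict Implicit.

Definition Sij d n (i : 'I_d) (j : 'I_n) : {set 'I_(d + n)} :=
  [set e | match fintype.split e with inl k => k != i | inr j' => j' == j end].

Lemma split_l d n (k : 'I_d) : fintype.split (lshift n k) = inl k.
Proof. exact: (unsplitK (inl _ k)). Qed.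
Lemma split_r d n (k : 'I_n) : fintype.split (rshift d k) = inr k.
Proof. exact: (unsplitK (inr _ k)). Qed.

Lemma inS_l d n i j (k : 'I_d) : (lshift n k \in Sij i j) = (k != i).
Proof. by rewrite inE split_l. Qed.
Lemma inS_r d n i (j k : 'I_n) : (rshift d k \in @Sij d n i j) = (k == j).
Proof. by rewrite inE split_r. Qed.

Lemma sumS (V : nmodType) d n i j (F : 'I_(d + n) -> V) :
  \sum_(e in @Sij d n i j) F e = \sum_(k < d | k != i) F (lshift n k) + F (rshift d j).
Proof.
rewrite big_split_ord; congr (_ + _).
  by apply: eq_bigl => k; rewrite inS_l.
by rewrite (eq_bigl (fun k => k == j)) ?big_pred1_eq // => k; rewrite inS_r.
Qed.

Lemma diag0 (V : nmodType) d (B : 'M[V]_d) p k : is_diag_mx B -> p != k -> B p k = 0.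
Proof. by move=> /is_diag_mxP h pk; apply: h. Qed.

Lemma entryS (R : pzRingType) d n (B : 'M[R]_d) (A : 'M[R]_(d, n)) i j
   (F : 'I_(d + n) -> R) p : is_diag_mx B ->
  \sum_(e in Sij i j) F e * row_mx B A p e =
  (if p == i then 0 else F (lshift n p) * B p p) + F (rshift d j) * A p j.
Proof.
move=> dB; rewrite sumS row_mxEr; congr (_ + _).
case: eqP => [->|/eqP pi].
  by rewrite big1 // => k ki; rewrite row_mxEl diag0 ?mulr0 // eq_sym.
rewrite (bigD1 p) //= row_mxEl big1 ?addr0 // => k /andP [_ kp].
by rewrite row_mxEl diag0 ?mulr0 // eq_sym.
Qed.

Lemma latE (R : pzRingType) d N (X : 'M[R]_(d, N)) (S : {set 'I_N}) (c : 'I_N -> R) p q :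
  (\sum_(e in S) c e *: col e X) p q = \sum_(e in S) c e * X p e.
Proof. by rewrite summxE; apply: eq_bigr => e _; rewrite !mxE. Qed.

Lemma lat1 d n (B : 'M[int]_d) (A : 'M[int]_(d, n)) i j (v : 'cV[int]_d) : is_diag_mx B ->
  in_lattice (row_mx B A) (Sij i j) v ->
  exists t, v i 0 = t * A i j /\ forall k, k != i -> (v k 0 - t * A k j) \in dvdz (B k k).
Proof.
move=> dB [c ->]; exists (c (rshift d j)); split.
  by rewrite latE entryS // eqxx add0r.
move=> k ki; rewrite latE entryS // (negbTE ki) addrK.
by apply: dvdz_mull; apply: dvdzz.
Qed.

Lemma lat2 d n (B : 'M[int]_d) (A : 'M[int]_(d, n)) i j (v : 'cV[int]_d) t : is_diag_mx B ->
  v i 0 = t * A i j -> (forall k, k != i -> (v k 0 - t * A k j) \in dvdz (B k k)) ->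
  in_lattice (row_mx B A) (Sij i j) v.
Proof.
move=> dB hi hk.
exists (fun e => match fintype.split e with inl k => divz (v k 0 - t * A k j) (B k k) | inr _ => t end).
apply/matrixP => p q; rewrite (ord1 q) latE entryS // split_l split_r.
case: eqP => [->|/eqP pi]; first by rewrite add0r.
by rewrite divzK ?hk // subrK.
Qed.

Lemma latB d N (X : 'M[int]_(d, N)) S v w :
  in_lattice X S v -> in_lattice X S w -> in_lattice X S (v - w).
Proof.
move=> [c ->] [c' ->]; exists (fun e => c e - c' e).
by rewrite -sumrB; apply: eq_bigr => e _; rewrite scalerBl.
Qed.

Lemma mult_le d N (X : 'M[int]_(d, N)) S k k' :
  mult_is X S k -> mult_is X S k' -> leq k k'.
Proof.
move=> [r [r1 r2 r3]] [r' [r1' r2' r3']].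
have f x : {y | in_lattice X S (r x - r' y)}.
  exact: constructive_indefinite_description (r3' _ (r1 x)).
have ginj : injective (fun x => sval (f x)).
  move=> x y eq; apply: r2.
  have := latB (svalP (f x)) (svalP (f y)); rewrite eq.
  by rewrite opprB addrA subrK.
by have := leq_card _ ginj; rewrite !card_ord.
Qed.

Lemma small_eq (x y : nat) (b t : int) : leq x.+1 (absz b) -> leq y.+1 (absz b) -> x%:Z - y%:Z = t * b -> x = y.
Proof. move=> hx hy e. have := congr1 absz e. rewrite abszM => h.
have hd : leq (absz (x%:Z - y%:Z)).+1 (absz b).
  case: (leqP x y) => hxy; [rewrite distnEr // | rewrite distnEl ?(ltnW hxy) //]; lia.
have t0 : absz t = 0%nat.
  case: (absz t) h hd => // k h hd. rewrite mulSn in h. lia.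
move/eqP: t0; rewrite absz_eq0 => /eqP t0. move: e; rewrite t0 mul0r. lia.
Qed.

Lemma span_all d n (B : 'M[int]_d) (A : 'M[int]_(d, n)) i j :
  is_diag_mx B -> (forall k, B k k != 0) -> A i j != 0 ->
  forall v, in_span (row_mx B A) (Sij i j) v.
Proof.
move=> dB nB na v.
pose a : R := (A i j)%:~R.
exists (fun e => match fintype.split e with
   inl k => ((v k 0)%:~R - ((v i 0)%:~R / a) * (A k j)%:~R) / (B k k)%:~R
 | inr _ => (v i 0)%:~R / a end).
have dB' : is_diag_mx (map_mx (fun z : int => (z%:~R : R)) B).
  by apply/is_diag_mxP => x y xy; rewrite mxE (is_diag_mxP dB x y xy) mulr0z.
apply/matrixP => p q; rewrite (ord1 q) latE /toR map_row_mx entryS //.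
rewrite !mxE split_l split_r.
case: eqP => [->|/eqP pi]; first by rewrite add0r divfK // intr_eq0.
by rewrite divfK ?intr_eq0 // subrK.
Qed.

Lemma row0_rank (F : fieldType) m N (M : 'M[F]_(m, N)) (i : 'I_m) :
  row i M = 0 -> \rank M != m.
Proof.
move=> h; apply/negP => rf.
have H : delta_mx (0 : 'I_1) i *m M = (0 : 'M_(1, m)) *m M by rewrite -rowE h mul0mx.
move/matrixP: (row_free_inj rf H) => /(_ 0 i).
by rewrite !mxE !eqxx /= => /eqP; rewrite oner_eq0.
Qed.

Lemma rk_zero d n (B : 'M[int]_d) (A : 'M[int]_(d, n)) i j :
  is_diag_mx B -> A i j = 0 -> rk (row_mx B A) (Sij i j) != d.
Proof.
move=> dB a0; apply: (@row0_rank _ _ _ _ i).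
apply/matrixP => q e; rewrite !mxE -(splitK e); case: (fintype.split e) => k /=.
  rewrite inS_l; case: eqP => //= /eqP ki.
  by rewrite split_l diag0 ?mulr0z // eq_sym.
by rewrite inS_r; case: eqP => // ->; rewrite split_r a0 mulr0z.
Qed.

Lemma rk_full d n (B : 'M[int]_d) (A : 'M[int]_(d, n)) i j :
  is_diag_mx B -> (forall k, B k k != 0) -> A i j != 0 ->
  rk (row_mx B A) (Sij i j) = d.
Proof.
move=> dB nB na; apply/eqP; rewrite /rk.
set M := \matrix_(_, _) _.
rewrite -/(row_free M) -kermx_eq0.
apply: contraT => nz.
set u := nz_row (kermx M).
have u0 : u != 0 by rewrite nz_row_eq0.
have uM : u *m M = 0 by apply/sub_kermxP; exact: nz_row_sub.
have ent e : \sum_p u 0 p * M p e = 0.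
  by move/matrixP: uM => /(_ 0 e); rewrite !mxE.
have hk k : k != i -> u 0 k = 0.
  move=> ki; have := ent (lshift n k).
  rewrite (bigD1 k) //= big1 ?addr0 => [|p pk].
    rewrite /M mxE inS_l ki row_mxEl => /eqP.
    by rewrite mulf_eq0 intr_eq0 (negbTE (nB k)) orbF => /eqP.
  by rewrite /M mxE inS_l ki row_mxEl diag0 ?mulr0z ?mulr0.
have hi : u 0 i = 0.
  have := ent (rshift d j); rewrite (bigD1 i) //= big1 ?addr0 => [|p pi].
    rewrite /M mxE inS_r eqxx row_mxEr => /eqP.
    by rewrite mulf_eq0 intr_eq0 (negbTE na) orbF => /eqP.
  by rewrite hk // mul0r.
suff: u == 0 by rewrite (negbTE u0).
apply/eqP/matrixP => q p; rewrite (ord1 q) mxE.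
by case: (p =P i) => [->|/eqP]; [exact: hi | exact: hk].
Qed.

Lemma Bnz d (B : 'M[int]_d) : is_diag_mx B -> \rank (toR B) = d -> forall k, B k k != 0.
Proof.
move=> dB rB k; apply/negP => /eqP h.
suff: \rank (toR B) != d by rewrite rB eqxx.
apply: (@row0_rank _ _ _ _ k); apply/matrixP => q e; rewrite !mxE.
case: (e =P k) => [->|/eqP ek]; first by rewrite h mulr0z.
by rewrite diag0 ?mulr0z // eq_sym.
Qed.

Definition mmv d n (B : 'M[int]_d) (A : 'M[int]_(d, n)) (i : 'I_d) (j : 'I_n) (k : 'I_d) : nat :=
  (if k == i then absz (A i j) else absz (B k k)).-1.

Lemma mod_lt (x b : int) : b != 0 -> leq (absz (modz x b)).+1 (absz b).
Proof.
move=> nb; have h1 := modz_ge0 x nb; have h2 := ltz_mod x nb.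
rewrite -ltz_nat gez0_abs // abszE; exact: h2.
Qed.

Lemma mult_count d n (B : 'M[int]_d) (A : 'M[int]_(d, n)) i j :
  is_diag_mx B -> (forall k, 0 < B k k) -> A i j != 0 ->
  mult_is (row_mx B A) (Sij i j) (absz (A i j) * \prod_(k | k != i) absz (B k k))%nat.
Proof.
move=> dB pB na.
have nB k : B k k != 0 by rewrite lt0r_neq0.
pose m k := mmv B A i j k.
pose T := {dffun forall k : 'I_d, 'I_(m k).+1}.
have mE k : (m k).+1 = if k == i then absz (A i j) else absz (B k k).
  by rewrite /m /mmv prednK //; case: eqP => _; rewrite absz_gt0.
have cT : #|T| = (absz (A i j) * \prod_(k | k != i) absz (B k k))%nat.
  rewrite card_dep_ffun foldrE big_image /= (bigD1 i) //= card_ord mE eqxx.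
  by congr (_ * _)%nat; apply: eq_bigr => k ki; rewrite card_ord mE (negbTE ki).
rewrite -cT.
pose rep (f : T) : 'cV[int]_d := \col_k ((f k : nat)%:Z).
exists (fun x => rep (enum_val x)); split.
- by move=> x; exact: span_all.
- move=> x y /(lat1 dB) [t [ti tk]].
  move: ti; rewrite !mxE => ti.
  have bd (z : T) k : leq (z k : nat).+1 (if k == i then absz (A i j) else absz (B k k)).
    by rewrite -mE; exact: ltn_ord.
  have fi : (enum_val x i : nat) = enum_val y i.
    by apply: (small_eq _ _ ti); have := bd _ i; rewrite eqxx.
  have t0 : t = 0.
    by move: ti; rewrite fi subrr => /eqP; rewrite eq_sym mulf_eq0 (negbTE na) orbF => /eqP.
  apply: enum_val_inj; apply/ffunP => k; apply: val_inj.
  case: (k =P i) => [->//|/eqP ki].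
  have := tk k ki; rewrite t0 mul0r subr0 !mxE => /dvdzP [c hc].
  by apply: (small_eq _ _ hc); have := bd _ k; rewrite (negbTE ki).
- move=> v _.
  pose t := divz (v i 0) (A i j).
  pose g k : nat := if k == i then absz (modz (v i 0) (A i j))
                    else absz (modz (v k 0 - t * A k j) (B k k)).
  have gl k : leq (g k).+1 (m k).+1.
    by rewrite mE /g; case: eqP => _; apply: mod_lt.
  pose f : T := [ffun k => inord (g k)].
  exists (enum_rank f); rewrite enum_rankK.
  apply: (@lat2 _ _ _ _ _ _ _ t dB).
    rewrite !mxE ffunE inordK // /g eqxx gez0_abs ?modz_ge0 //.
    by rewrite {1}(divz_eq (v i 0) (A i j)) addrK.
  move=> k ki; rewrite !mxE ffunE inordK // /g (negbTE ki) gez0_abs ?modz_ge0 //.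
  rewrite addrAC {1}(divz_eq (v k 0 - t * A k j) (B k k)) addrK.
  by apply: dvdz_mull; apply: dvdzz.
Qed.

Unset Implicit Arguments.

Theorem lemma3p3 (d n : nat) (B : 'M[int]_d) (A A' : 'M[int]_(d, n)) :
  rk (row_mx B A) setT = d ->
  is_diag_mx B ->
  (forall i : 'I_d, 0 <= B i i) ->
  \rank (toR B) = d ->
  same_arith_matroid (row_mx B A) (row_mx B A') ->
  forall (i : 'I_d) (j : 'I_n), `|A i j| = `|A' i j|.
Proof.
move=> _ dB pB rB [hrk hm] i j.
have nB := Bnz dB rB.
have pB' k : 0 < B k k by rewrite lt0r nB pB.
case: (A i j =P 0) => [a0|/eqP na]; case: (A' i j =P 0) => [a0'|/eqP na'].
- by rewrite a0 a0'.
- have := rk_zero dB a0; rewrite hrk rk_full //.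
  by rewrite eqxx.
- have := rk_zero dB a0'; rewrite -hrk rk_full //.
  by rewrite eqxx.
- have h1 := mult_count dB pB' na.
  have h2 := mult_count dB pB' na'.
  have h1' := (proj1 (hm _ _) h1).
  have h2' := (proj2 (hm _ _) h2).
  have e := anti_leq (introT andP (conj (mult_le h1' h2) (mult_le h2' h1))).
  have P0 : (0 < \prod_(k | k != i) absz (B k k))%nat.
    by rewrite prodn_cond_gt0 // => k _; rewrite absz_gt0.
  move/eqP: e; rewrite eqn_pmul2r // => /eqP e.
  by rewrite -!abszE e.
Qed.
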